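(* Let $\psi$ be a finite conjunction of linear constraints, each of the form $\left(\sum_i d_i x_i\right)\odot n$ with integers $d_i,n$, database objects $x_i$, and $\odot\in\{=,<,\le\}$, and let $D$ be a database satisfying $\psi$. For each site $k\in\{1,\dots,K\}$ form the local treaty template $\varphi_{\Gamma_k}$ by replacing each clause $\left(\sum_i d_i x_i\right)\odot n$ of $\psi$ by $\left(\sum_{\mathit{Loc}(x_i)=k} d_i x_i + c\right)\odot n$, where $c$ is a fresh integer-valued configuration variable (distinct for each clause and each site). Then there exists an assignment of integer values to all configuration variables such that the resulting formulas $\varphi_{\Gamma_1},\dots,\varphi_{\Gamma_K}$ (which mention only objects located at the respective site) satisfy: (H1) for every database $D'$, $\bigwedge_{1\le k\le K}\varphi_{\Gamma_k}(D')$ implies $\psi(D')$; and (H2) $\varphi_{\Gamma_k}(D)$ holds for every $k=1,\dots,K$.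
   Context: A database is a map from a countably infinite set of objects to the integers with finite support; objects are assigned to sites $\{1,\dots,K\}$ by $\mathit{Loc}$, each object residing at exactly one site. A formula is evaluated on a database by substituting each object's value for the object. *)

(* Defs.v *)
From mathcomp Require Import all_boot all_order all_algebra.
Set Implicit Arguments. Unset Strict Implicit. Unset Printing Implicit Defensive.
Import Order.TTheory GRing.Theory Num.Theory.
Local Open Scope ring_scope.

Definition obj := nat.

Definition database := obj -> int.
Definition fin_supp (D : database) : Prop :=
  exists s : seq obj, forall x, x \notin s -> D x = 0.

Inductive cmp := CEq | CLt | CLe.
Definition eval_cmp (o : cmp) (a b : int) : bool :=
  match o with CEq => a == b | CLt => a < b | CLe => a <= b end.

Record constraint := Constraint {
  terms : seq (int * obj);
  op : cmp;
  rhs : int }.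

Definition lhs_val (D : database) (t : seq (int * obj)) : int :=
  \sum_(p <- t) p.1 * D p.2.

Definition sat_constraint (D : database) (c : constraint) : bool :=
  eval_cmp (op c) (lhs_val D (terms c)) (rhs c).

Definition sat (D : database) (psi : seq constraint) : Prop :=
  forall j, (j < size psi)%N -> sat_constraint D (nth (Constraint [::] CEq 0) psi j).

(* Local treaty template for site k: clause j of psi becomes
   (sum_{Loc x_i = k} d_i x_i + c) op n, with configuration variable
   c = conf k j (distinct per clause and site). *)
Definition local_treaty (K : nat) (Loc : obj -> 'I_K) (psi : seq constraint)
    (conf : 'I_K -> nat -> int) (k : 'I_K) (D : database) : Prop :=
  forall j, (j < size psi)%N ->
    let c := nth (Constraint [::] CEq 0) psi j in
    eval_cmp (op c)
      (lhs_val D [seq p <- terms c | Loc p.2 == k] + conf k j) (rhs c).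

(* Main.v *)
Require Import Defs.
From mathcomp Require Import all_boot all_order all_algebra.
From mathcomp Require Import zify.
Import Order.TTheory GRing.Theory Num.Theory.
Local Open Scope ring_scope.

Lemma lhs_split (K : nat) (Loc : obj -> 'I_K) (D : database) (t : seq (int * obj)) :
  lhs_val D t = \sum_(k : 'I_K) lhs_val D [seq p <- t | Loc p.2 == k].
Proof.
elim: t => [|x t IH].
  by rewrite /lhs_val big_nil big1 // => k _; rewrite big_nil.
rewrite /lhs_val big_cons -/(lhs_val D t) IH.
rewrite (bigD1 (Loc x.2)) //= [in RHS](bigD1 (Loc x.2)) //= eqxx /lhs_val big_cons addrA.
congr (_ + _); apply: eq_bigr => k hk; rewrite /=.
by rewrite eq_sym (negbTE hk).
Qed.

Theorem theorem4p2 (K : nat) (Loc : obj -> 'I_K) (psi : seq constraint)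
    (D : database) (hD : fin_supp D) (hsat : sat D psi) :
  exists conf : 'I_K -> nat -> int,
    (forall D' : database, fin_supp D' ->
       (forall k : 'I_K, local_treaty Loc psi conf k D') -> sat D' psi) /\
    (forall k : 'I_K, local_treaty Loc psi conf k D).
Proof.
set L := fun (D0 : database) (k : 'I_K) j =>
  lhs_val D0 [seq p <- terms (nth (Constraint [::] CEq 0) psi j) | Loc p.2 == k].
set k0 := Loc 0%N.
exists (fun k j => let c := nth (Constraint [::] CEq 0) psi j in
  if k == k0 then lhs_val D (terms c) - L D k j
  else rhs c - L D k j - (if op c is CLt then 1 else 0)).
split.
- move=> D' _ H j hj.
  have hk := fun k => H k j hj.
  rewrite /sat_constraint.
  have ET : lhs_val D' (terms (nth (Constraint [::] CEq 0) psi j)) =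
      lhs_val D (terms (nth (Constraint [::] CEq 0) psi j)) + \sum_k (L D' k j - L D k j).
    by rewrite sumrB (lhs_split _ Loc D') (lhs_split _ Loc D) /L addrC subrK.
  rewrite ET (bigD1 k0) //=.
  have h0 := hk k0; rewrite /= eqxx -/(L D' k0 j) in h0.
  have hs : forall k, k != k0 -> eval_cmp (op (nth (Constraint [::] CEq 0) psi j))
      (L D' k j + (rhs (nth (Constraint [::] CEq 0) psi j) - L D k j - (if op (nth (Constraint [::] CEq 0) psi j) is CLt then 1 else 0)))
      (rhs (nth (Constraint [::] CEq 0) psi j)).
    by move=> k hk'; have := hk k; rewrite /= (negbTE hk').
  move: h0 hs; case: (op (nth (Constraint [::] CEq 0) psi j)) => /= h0 hs.
  + rewrite big1; last by move=> k hk'; move: (hs k hk') => /eqP; lia.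
    move: h0 => /eqP; lia.
  + have : \sum_(i | i != k0) (L D' i j - L D i j) <= 0.
      apply: sumr_le0 => k hk'; move: (hs k hk'); lia.
    move: h0; rewrite /L; move=> h0 hS.
    have key : forall (T a b S n : int), S <= 0 -> a + (T - b) < n -> T + (a - b + S) < n by move=> *; lia.
    exact: key hS h0.
  + have : \sum_(i | i != k0) (L D' i j - L D i j) <= 0.
      apply: sumr_le0 => k hk'; move: (hs k hk'); lia.
    move: h0; rewrite /L; move=> h0 hS.
    have key : forall (T a b S n : int), S <= 0 -> a + (T - b) <= n -> T + (a - b + S) <= n by move=> *; lia.
    exact: key hS h0.
- move=> k j hj /=.
  have := hsat j hj; rewrite /sat_constraint.
  case: eqP => _.
    by rewrite -/(L D k j) addrC subrK.
  rewrite -/(L D k j).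
  case: (op _) => /=; lia.
Qed.
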